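(* Let $q$ be a prime power and $m$ a positive integer with $m\mid q-1$. Let $\mathrm{Fix}(a)$ be the set of cyclic subgroups $H\le D(2,q)$ of order $m$ with $aHa^{-1}=H$; every such $H$ is of the form $\langle\mathrm{dia}(\lambda,\lambda^l)\rangle$ with $\lambda\in\mathbb{F}_q^*$ of order $m$ and $l\in(\mathbb{Z}/m\mathbb{Z})^\times$, $l^2\equiv1\pmod m$, with $l$ uniquely determined by $H$. Then the map $\mathrm{Fix}(a)\to\mathrm{Aut}(\mathbb{Z}_m)\cong(\mathbb{Z}/m\mathbb{Z})^\times$, $\langle\mathrm{dia}(\lambda,\lambda^l)\rangle\mapsto l$, is bijective if and only if $m=2^t3^s$ with $0\le t\le 3$ and $0\le s\le 1$.
   Context: $D(2,q)$ is the group of invertible diagonal $2\times2$ matrices over $\mathbb{F}_q$; $\mathrm{dia}(d_1,d_2)$ denotes the diagonal matrix with diagonal entries $d_1,d_2$; $a=\begin{pmatrix}0&1\\1&0\end{pmatrix}$. *)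

(* Defs.v *)
From HB Require Import structures.
From mathcomp Require Import all_boot all_order all_algebra all_fingroup all_solvable all_field.
Set Implicit Arguments. Unset Strict Implicit. Unset Printing Implicit Defensive.
Import GRing.Theory.
Local Open Scope ring_scope.
Local Open Scope group_scope.

Section D2q.
Variable F : finFieldType.

Definition dia (d1 d2 : F) : 'M[F]_2 :=
  \matrix_(i < 2, j < 2) (if i == j then (if i == ord0 then d1 else d2) else 0%R).

Definition swapmx : 'M[F]_2 := \matrix_(i < 2, j < 2) (i != j)%:R.

Definition D2 : {set {'GL_2[F]}} := [set g : {'GL_2[F]} | is_diag_mx (GLval g)].

Definition Fixa (a : {'GL_2[F]}) (m : nat) : {set {group {'GL_2[F]}}} :=
  [set H : {group {'GL_2[F]}} |
     [&& H \subset D2, cyclic H, #|H| == m & H :^ a^-1 == H]].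

Definition corr (m : nat) (H : {group {'GL_2[F]}}) (l : nat) : bool :=
  [exists lam : F, m.-primitive_root lam &&
     [exists d : {'GL_2[F]}, (GLval d == dia lam (lam ^+ l)%R) && (H == <[d]> :> {set _})]].

Definition fixmap (m : nat) (H : {group {'GL_2[F]}}) : option 'I_m :=
  [pick l : 'I_m | coprime l m && corr m H l].

Definition fixmap_bijective (a : {'GL_2[F]}) (m : nat) : Prop :=
  (forall H1 H2, H1 \in Fixa a m -> H2 \in Fixa a m ->
     fixmap m H1 = fixmap m H2 -> H1 = H2) /\
  (forall H, H \in Fixa a m -> exists l, fixmap m H = Some l) /\
  (forall l : 'I_m, coprime l m -> exists2 H, H \in Fixa a m & fixmap m H = Some l).
End D2q.

(* Main.v *)
Require Import Defs.
From HB Require Import structures.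
From mathcomp Require Import all_boot all_order all_algebra all_fingroup all_solvable all_field.
Set Implicit Arguments. Unset Strict Implicit. Unset Printing Implicit Defensive.
Import GRing.Theory.

Section S.
Variable F : finFieldType.
Local Open Scope ring_scope.

Lemma ord2 (i : 'I_2) : i = 0 \/ i = 1.
Proof. case: i => [[|[|//]] Hi]; [left|right]; exact: val_inj. Qed.

Lemma dia_mul (x y x' y' : F) : dia x y * dia x' y' = dia (x*x') (y*y').
Proof.
apply/matrixP=> i j; rewrite !mxE big_ord_recl big_ord1 !mxE.
by case: (ord2 i) => ->; case: (ord2 j) => -> /=; rewrite ?mulr0 ?mul0r ?addr0 ?add0r.
Qed.

Lemma dia11 : dia 1 1 = 1 :> 'M[F]_2.
Proof.
apply/matrixP=> i j; rewrite !mxE.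
by case: (ord2 i) => ->; case: (ord2 j) => -> /=.
Qed.

Lemma dia_exp (x y : F) k : dia x y ^+ k = dia (x ^+ k) (y ^+ k).
Proof.
elim: k => [|k IH]; first by rewrite !expr0 dia11.
by rewrite exprS IH dia_mul -!exprS.
Qed.

Lemma dia_inj (x y x' y' : F) : dia x y = dia x' y' -> x = x' /\ y = y'.
Proof.
move/matrixP=> E; move: (E 0 0) (E 1 1); rewrite !mxE /=; done.
Qed.

Lemma swap_dia (x y : F) : swapmx F * dia x y * swapmx F = dia y x.
Proof.
apply/matrixP=> i j; rewrite !mxE big_ord_recl big_ord1 !mxE.
rewrite !big_ord_recl !big_ord0 !mxE.
by case: (ord2 i) => ->; case: (ord2 j) => -> /=; rewrite ?mulr0 ?mul0r ?addr0 ?add0r ?mulr1 ?mul1r.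
Qed.

Lemma swap2 : swapmx F * swapmx F = 1.
Proof.
apply/matrixP=> i j; rewrite !mxE big_ord_recl big_ord1 !mxE.
by case: (ord2 i) => ->; case: (ord2 j) => -> /=; rewrite ?mulr0 ?mul0r ?addr0 ?add0r ?mulr1 ?mul1r.
Qed.

Lemma GL_expE (d : {'GL_2[F]}) k : GLval (d ^+ k)%g = GLval d ^+ k.
Proof. elim: k => [|k IH] //; by rewrite expgS GL_ME IH exprS. Qed.

Lemma D2_dia (g : {'GL_2[F]}) : g \in D2 F -> GLval g = dia (GLval g 0 0) (GLval g 1 1).
Proof.
rewrite inE => /is_diag_mxP D; apply/matrixP=> i j; rewrite !mxE.
case: (ord2 i) => ->; case: (ord2 j) => -> //=; by rewrite D.
Qed.


Lemma prim_exists m : (0 < m)%N -> (m %| #|F|.-1)%N -> exists lam : F, m.-primitive_root lam.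
Proof.
move=> m0 mq.
have q0 : (0 < #|F|.-1)%N.
  rewrite -card_finField_unit; apply/card_gt0P; exists 1%g; by rewrite inE.
have: has (#|F|.-1).-primitive_root (enum (predC1 (0:F))).
  apply: has_prim_root => //; last by rewrite -cardE cardC1.
  - apply/allP => x; rewrite mem_enum inE /= => x0; rewrite unity_rootE.
    apply/eqP; apply: (mulfI x0); rewrite mulr1 -exprS; rewrite (@prednK #|F|); last exact: leq_trans q0 (leq_pred _).
    exact: expf_card.
  - exact: enum_uniq.
case/hasP => g _ pg; exists (g ^+ (#|F|.-1 %/ m)); exact: dvdn_prim_root.
Qed.

Lemma GLeq (u v : {'GL_2[F]}) : GLval u = GLval v -> u = v.
Proof. exact: val_inj. Qed.

Lemma a_inv (a : {'GL_2[F]}) : GLval a = swapmx F -> (a^-1 = a)%g.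
Proof.
move=> Ha; apply/eqP; rewrite eq_invg_mul; apply/eqP; apply: GLeq.
rewrite GL_ME Ha swap2; by [].
Qed.

Lemma conj_a (a g : {'GL_2[F]}) x y : GLval a = swapmx F -> GLval g = dia x y ->
  GLval (g ^ a^-1)%g = dia y x.
Proof.
move=> Ha Hg; rewrite /conjg invgK (a_inv Ha) !GL_ME Ha Hg mulrA; exact: swap_dia.
Qed.

Lemma mkGL (x y : F) : x != 0 -> y != 0 -> exists d : {'GL_2[F]}, GLval d = dia x y.
Proof.
move=> x0 y0.
have U : dia x y \is a GRing.unit.
  by apply/unitrP; exists (dia x^-1 y^-1); rewrite !dia_mul !mulfV ?mulVf // dia11.
by exists (FinRing.unit _ U).
Qed.


Lemma dia_one (g : {'GL_2[F]}) x y : GLval g = dia x y -> x = 1 -> y = 1 -> g = 1%g.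
Proof. by move=> Hg ex ey; apply: GLeq; rewrite Hg ex ey dia11. Qed.

Lemma corr_sq m (a : {'GL_2[F]}) (H : {group {'GL_2[F]}}) l :
  GLval a = swapmx F -> H \in Fixa a m -> corr m H l -> (l * l == 1 %[mod m])%N.
Proof.
move=> Ha; rewrite inE => /and4P[_ _ _ /eqP HJ].
case/existsP => lam /andP[prim /existsP[d /andP[/eqP Hd /eqP HH]]].
have: (d ^ a^-1)%g \in <[d]>%g by rewrite -HH -HJ memJ_conjg HH cycle_id.
case/cycleP => k Ek.
have := conj_a Ha Hd; rewrite Ek GL_expE Hd dia_exp => /dia_inj [E1 E2].
have: lam ^+ (l * l) = lam ^+ 1.
  by rewrite expr1 exprM -{1}E1 -exprM mulnC exprM E2.
by move/eqP; rewrite (eq_prim_root_expr prim).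
Qed.

Lemma in_cyc m l (lam mu : F) (d e : {'GL_2[F]}) :
  m.-primitive_root lam -> m.-primitive_root mu ->
  GLval d = dia lam (lam ^+ l) -> GLval e = dia mu (mu ^+ l) -> e \in <[d]>%g.
Proof.
move=> pl pm Hd He.
have [i Ei] := prim_rootP pl (prim_expr_order pm).
apply/cycleP; exists i; apply: GLeq.
by rewrite GL_expE He Hd dia_exp Ei -!exprM mulnC.
Qed.

Lemma corr_uniqH m (H1 H2 : {group {'GL_2[F]}}) l : corr m H1 l -> corr m H2 l -> H1 = H2.
Proof.
case/existsP => lam /andP[pl /existsP[d /andP[/eqP Hd /eqP H1d]]].
case/existsP => mu /andP[pm /existsP[e /andP[/eqP He /eqP H2e]]].
apply: val_inj => /=; rewrite H1d H2e; apply/eqP; rewrite eqEsubset !cycle_subG.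
by rewrite (in_cyc pl pm Hd He) (in_cyc pm pl He Hd).
Qed.

Lemma corr_uniql m (H : {group {'GL_2[F]}}) l l' : (l < m)%N -> (l' < m)%N ->
  corr m H l -> corr m H l' -> l = l'.
Proof.
move=> lm l'm.
case/existsP => lam /andP[pl /existsP[d /andP[/eqP Hd /eqP Hdd]]].
case/existsP => mu /andP[pm /existsP[e /andP[/eqP He /eqP Hee]]].
have: e \in <[d]>%g by rewrite -Hdd Hee cycle_id.
case/cycleP => j Ej.
move: He; rewrite Ej GL_expE Hd dia_exp => /dia_inj [E1 E2].
have: mu ^+ l' == mu ^+ l by rewrite -E2 -E1 -!exprM mulnC.
by rewrite (eq_prim_root_expr pm) !modn_small // => /eqP.
Qed.


Lemma corr_exists m (a : {'GL_2[F]}) (H : {group {'GL_2[F]}}) :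
  GLval a = swapmx F -> (0 < m)%N -> H \in Fixa a m ->
  exists l : 'I_m, coprime l m && corr m H l.
Proof.
move=> Ha m0; rewrite inE => /and4P[HD /cyclicP[g Hg] /eqP Hcard /eqP HJ].
have gD : g \in D2 F by apply: (subsetP HD); rewrite Hg cycle_id.
set x := GLval g 0 0; set y := GLval g 1 1.
have Hgd : GLval g = dia x y := D2_dia gD.
have og : #[g]%g = m by rewrite /order -Hg.
have: (g ^ a^-1)%g \in <[g]>%g by rewrite -Hg -HJ memJ_conjg Hg cycle_id.
case/cycleP => k Ek.
have := conj_a Ha Hgd; rewrite Ek GL_expE Hgd dia_exp => /dia_inj [E1 E2].
have xm : x ^+ m = 1.
  have := expg_order g; rewrite og => /(congr1 GLval).
  by rewrite GL_expE Hgd dia_exp GL_1E -dia11 => /dia_inj [].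
have px : m.-primitive_root x.
  have [m' pm' dm'] := prim_order_exists m0 xm.
  suff: (m %| m')%N by move=> h; rewrite -(eqP (_ : m' == m)) // eqn_dvd dm' h.
  rewrite -og order_dvdn; apply/eqP; apply: (dia_one (x := x ^+ m') (y := y ^+ m')).
  - by rewrite GL_expE Hgd dia_exp.
  - exact: prim_expr_order.
  - by rewrite -E1 exprAC (prim_expr_order pm') expr1n.
have kk : (k * k == 1 %[mod m])%N.
  rewrite -(eq_prim_root_expr px) expr1 exprM E1 E2; done.
have ck : coprime k m.
  have : coprime (k * k) m by rewrite -coprime_modl (eqP kk) coprime_modl coprime1n.
  by rewrite coprimeMl andbb.
exists (Ordinal (ltn_pmod k m0)); rewrite /= coprime_modl ck /=.
apply/existsP; exists x; rewrite px /=; apply/existsP; exists g.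
by rewrite Hgd prim_expr_mod // E1 eqxx Hg eqxx.
Qed.

Lemma constr m (a : {'GL_2[F]}) l (lam : F) : GLval a = swapmx F ->
  m.-primitive_root lam -> coprime l m -> (l * l == 1 %[mod m])%N ->
  exists H : {group {'GL_2[F]}}, H \in Fixa a m /\ corr m H l.
Proof.
move=> Ha pl cl ll.
have m0 := prim_order_gt0 pl.
have l0 : lam != 0 by rewrite (prim_root_eq0 pl) -lt0n.
have [d Hd] := mkGL l0 (expf_neq0 l l0).
exists <[d]>%G; split; last first.
  by apply/existsP; exists lam; rewrite pl /=; apply/existsP; exists d; rewrite Hd !eqxx.
have od : #[d]%g = m.
  apply/eqP; rewrite eqn_dvd order_dvdn; apply/andP; split.
    apply/eqP; apply: (dia_one (x := lam ^+ m) (y := (lam ^+ l) ^+ m)).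
    - by rewrite GL_expE Hd dia_exp.
    - exact: (prim_expr_order pl).
    - by rewrite exprAC (prim_expr_order pl) expr1n.
  rewrite (prim_order_dvd pl); have := expg_order d => /(congr1 GLval).
  by rewrite GL_expE Hd dia_exp GL_1E -dia11 => /dia_inj [-> _].
rewrite inE; apply/and4P; split.
- apply/subsetP => z /cycleP[i ->]; rewrite inE GL_expE Hd dia_exp.
  apply/is_diag_mxP => i0 j0; rewrite mxE => nij; case: ifP => // /eqP E; by rewrite E eqxx in nij.
- exact: cycle_cyclic.
- by rewrite -/(order d) od.
- have Ej : (d ^ a^-1)%g = (d ^+ l)%g.
    apply: GLeq; rewrite (conj_a Ha Hd) GL_expE Hd dia_exp -exprM.
    by rewrite -(prim_expr_mod pl (l * l)) (eqP ll) prim_expr_mod // expr1.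
  rewrite /= -cycleJ Ej eqEcard cycleX /=.
  have := orderXgcd d l; rewrite /order => ->; by rewrite -/(order d) od gcdnC (eqP cl) divn1 leqnn.
Qed.

End S.

Lemma nt2 t s l : t <= 3 -> s <= 1 -> coprime l (2 ^ t * 3 ^ s) -> l * l == 1 %[mod 2 ^ t * 3 ^ s].
Proof.
move=> ht hs.
have H : all (fun r => ~~ coprime r (2 ^ t * 3 ^ s) || (r * r == 1 %[mod 2 ^ t * 3 ^ s])) (iota 0 (2 ^ t * 3 ^ s)).
  by case: t ht => [|[|[|[|//]]]] _; case: s hs => [|[|//]] _; vm_compute.
have m0 : 0 < 2 ^ t * 3 ^ s by rewrite muln_gt0 !expn_gt0.
rewrite -coprime_modl -modnMml -modnMmr => c.
move/allP: H => /(_ (l %% (2 ^ t * 3 ^ s))); rewrite mem_iota add0n ltn_mod m0 c /= => /(_ isT).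
by [].
Qed.

Lemma nt1 m : 0 < m -> (forall l, coprime l m -> l * l == 1 %[mod m]) ->
  exists t s, [/\ t <= 3, s <= 1 & m = 2 ^ t * 3 ^ s].
Proof.
move=> m0 P.
have [n cn Em] := pfactor_coprime (isT : prime 2) m0.
set t := logn 2 m in Em.
have cop : coprime (2 ^ t) n by rewrite coprimeXl.
have d2 : 2 ^ t %| m by rewrite Em dvdn_mull.
have dn : n %| m by rewrite Em dvdn_mulr.
have At : t <= 3.
  pose l := chinese (2 ^ t) n 3 1.
  have cl : coprime l m.
    rewrite Em coprimeMr; apply/andP; split.
      by rewrite -coprime_modl (chinese_modr cop) coprime_modl coprime1n.
    by rewrite -coprime_modl (chinese_modl cop) coprime_modl coprimeXr.
  have E : (l * l) %% 2 ^ t = 1 %% 2 ^ t by rewrite -(modn_dvdm _ d2) (eqP (P l cl)) modn_dvdm.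
  move: E; rewrite -modnMml -modnMmr (chinese_modl cop) modnMml modnMmr => /eqP.
  rewrite eqn_mod_dvd //; change (2 ^ t %| 2 ^ 3 -> t <= 3); by rewrite dvdn_Pexp2l.
have Bn : n %| 3.
  pose l := chinese (2 ^ t) n 1 2.
  have cl : coprime l m.
    rewrite Em coprimeMr; apply/andP; split.
      by rewrite -coprime_modl (chinese_modr cop) coprime_modl.
    by rewrite -coprime_modl (chinese_modl cop) coprime_modl coprime1n.
  have E : (l * l) %% n = 1 %% n by rewrite -(modn_dvdm _ dn) (eqP (P l cl)) modn_dvdm.
  move: E; rewrite -modnMml -modnMmr (chinese_modr cop) modnMml modnMmr => /eqP.
  by rewrite eqn_mod_dvd.
have n0 : 0 < n by move: m0; rewrite Em muln_gt0 => /andP[].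
have : n <= 3 by apply: dvdn_leq.
clear -Bn cn n0 Em At; move: Bn cn n0 Em; case: n => [|[|[|[|//]]]] //= _ _ _ Em _.
  exists t; exists 0; split => //; by rewrite Em mul1n muln1.
exists t; exists 1; split => //; by rewrite Em mulnC.
Qed.

Theorem mainTheorem7 (F : finFieldType) (m : nat) (a : {'GL_2[F]}) :
  (0 < m)%N -> (m %| #|F|.-1)%N -> GLval a = swapmx F ->
  fixmap_bijective a m <->
  (exists t s : nat, [/\ (t <= 3)%N, (s <= 1)%N & m = (2 ^ t * 3 ^ s)%N]).
Proof.
move=> m0 mq Ha; split.
- case=> [inj [tot sur]]; apply: (nt1 m0) => l cl.
  have cl' : coprime (Ordinal (ltn_pmod l m0)) m by rewrite /= coprime_modl.
  have [H HF Hf] := sur _ cl'.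
  move: Hf; rewrite /fixmap; case: pickP => [l'' /andP[_ Hc] [E] | _ //].
  have := corr_sq Ha HF Hc; rewrite E /= modnMml modnMmr; done.
- case=> t [s [ht hs Em]].
  have sq l : coprime l m -> (l * l == 1 %[mod m])%N by rewrite Em; apply: nt2.
  have fs H : H \in Fixa a m -> exists l, fixmap m H = Some l /\ corr m H l.
    move=> HF; rewrite /fixmap; case: pickP => [l /andP[_ c] | N]; first by exists l.
    have [l Hl] := corr_exists Ha m0 HF; by rewrite N in Hl.
  split; [|split].
  + move=> H1 H2 F1 F2 E.
    have [l1 [E1 C1]] := fs _ F1; have [l2 [E2 C2]] := fs _ F2.
    move: E; rewrite E1 E2 => [[El]]; rewrite El in C1; exact: corr_uniqH C1 C2.
  + move=> H HF; have [l [E _]] := fs _ HF; by exists l.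
  + move=> l cl; have [lam pl] := prim_exists m0 mq.
    have [H [HF C]] := constr Ha pl cl (sq _ cl).
    exists H => //; have [l' [E C']] := fs _ HF.
    rewrite E; congr Some; apply: val_inj; exact: corr_uniql (ltn_ord l') (ltn_ord l) C' C.
Qed.
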